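(* Let $G$ be a connected simple graph of order $n$ and let $M_{G_1}$ be a mixed graph whose underlying graph $G_1$ is a spanning subgraph of $G$. The following are equivalent: (a) $G$ (regarded as a mixed graph with no arcs) and $M_{G_1}$ are cospectral; (b) $\lambda_1(G)=\lambda_1(M_{G_1})$; (c) $G_1=G$, and $V(M_{G_1})$ has a partition $\bigcup_{j\in\mathbb{T}_6}V_j$ such that for each $j\in\mathbb{T}_6$ the induced mixed subgraph $M_{G_1}[V_j]$ contains only undirected edges, and every other edge of $M_{G_1}$ is an arc $\overrightarrow{uv}$ with $u\in V_j$ and $v\in V_{\bar\omega\cdot j}$ for some $j\in\mathbb{T}_6$; (d) $G$ and $M_{G_1}$ are switching equivalent.
   Context: A mixed graph $M_G$ is obtained from a finite simple graph $G$ by orienting the edges of some subset of $E(G)$ (arcs $\overrightarrow{uv}$; the others are undirected edges $\{u,v\}$). With $\omega=\frac{1+\mathbf{i}\sqrt3}{2}$, $N(M_G)$ has $(u,v)$-entry $\omega$ if $\overrightarrow{uv}$ is an arc, $\bar\omega$ if $\overrightarrow{vu}$ is an arc, $1$ for an undirected edge $\{u,v\}$, $0$ otherwise; eigenvalues of $M_G$ are those of $N(M_G)$, $\lambda_1$ denotes the largest one, and cospectral means same eigenvalue multiset. $\mathbb{T}_6=\{1,-1,\omega,\bar\omega,-\omega,-\bar\omega\}$. Given a partition $V(M_G)=\bigcup_{j\in\mathbb{T}_6}V_j$ into six possibly empty sets, an edge or arc $xy$ has type $(j,k)$ if $x\in V_j,y\in V_k$ (for arcs, directed from $x$ to $y$).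 The partition is admissible if every undirected edge has type $(j,j)$ or $(j,\omega j)$ for some $j$, and every arc has type $(j,j)$, $(j,\bar\omega j)$ or $(j,-\omega j)$ for some $j$. A three-way switching with respect to an admissible partition replaces each undirected edge of type $(j,\omega j)$ by an arc from its end in $V_j$ to its end in $V_{\omega j}$, replaces each arc of type $(j,\bar\omega j)$ by an undirected edge, and reverses each arc of type $(j,-\omega j)$. The converse of a mixed graph reverses all arcs. Two mixed graphs are switching equivalent if one is obtained from the other by a sequence of three-way switchings and taking converses. *)

(* Defs.v *)
From HB Require Import structures.
From mathcomp Require Import all_boot all_order all_algebra all_field.
From Stdlib Require Import Relations.
Set Implicit Arguments. Unset Strict Implicit. Unset Printing Implicit Defensive.
Import Order.TTheory GRing.Theory Num.Theory.
Local Open Scope ring_scope.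

Definition omega : algC := (1 + 'i * sqrtC 3) / 2.
Definition omegab : algC := omega^*.

Definition T6 : seq algC := [:: 1; -1; omega; omegab; - omega; - omegab].

Definition simple_graph n (g : rel 'I_n) : Prop :=
  (forall u v, g u v = g v u) /\ (forall u, g u u = false).

Definition connected_graph n (g : rel 'I_n) : Prop :=
  forall u v : 'I_n, connect g u v.

(* A mixed graph: underlying edge relation mE and arc relation mA
   (mA u v means the edge {u,v} is oriented as the arc u -> v). *)
Record mgraph (n : nat) := MGraph { mE : rel 'I_n; mA : rel 'I_n }.

Definition mgraph_wf n (M : mgraph n) : Prop :=
  simple_graph (mE M) /\
  (forall u v, mA M u v -> mE M u v) /\
  (forall u v, mA M u v -> ~~ mA M v u).

Definition undir n (M : mgraph n) (u v : 'I_n) : bool :=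
  [&& mE M u v, ~~ mA M u v & ~~ mA M v u].

Definition of_graph n (g : rel 'I_n) : mgraph n := MGraph g (fun _ _ => false).

Definition Nmat n (M : mgraph n) : 'M[algC]_n :=
  \matrix_(u, v) (if mA M u v then omega
                  else if mA M v u then omegab
                  else if mE M u v then 1 else 0).

(* cospectral: same multiset of eigenvalues, i.e. every value has the same
   (algebraic) multiplicity as a root of the characteristic polynomial *)
Definition cospectral n (A B : 'M[algC]_n) : Prop :=
  forall x : algC, mup x (char_poly A) = mup x (char_poly B).

Definition is_lambda1 n (A : 'M[algC]_n) (l : algC) : Prop :=
  eigenvalue A l /\ forall m, eigenvalue A m -> m <= l.

(* partition of the vertex set into the six (possibly empty) classes V_j,
   j in T6, encoded by the class function p : V_j = [set u | p u == j] *)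
Definition T6_partition n (p : 'I_n -> algC) : Prop := forall u, p u \in T6.

Definition admissible n (M : mgraph n) (p : 'I_n -> algC) : Prop :=
  T6_partition p /\
  (forall u v, undir M u v ->
     [|| p v == p u, p v == omega * p u | p u == omega * p v]) /\
  (forall u v, mA M u v ->
     [|| p v == p u, p v == omegab * p u | p v == - omega * p u]).

(* the arc relation after the three-way switching w.r.t. p *)
Definition switch_arcs n (M : mgraph n) (p : 'I_n -> algC) : rel 'I_n :=
  fun x y =>
    [|| undir M x y && (p y == omega * p x),
        mA M x y && (p y == p x)
      | mA M y x && (p x == - omega * p y)].

(* one elementary step: a three-way switching or taking the converse
   (stated extensionally on the edge and arc relations) *)
Definition switch_step n (M M' : mgraph n) : Prop :=
  (forall x y, mE M' x y = mE M x y) /\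
  ((exists p, admissible M p /\ forall x y, mA M' x y = switch_arcs M p x y)
   \/ (forall x y, mA M' x y = mA M y x)).

Definition switching_equivalent n (M1 M2 : mgraph n) : Prop :=
  Relation_Operators.clos_refl_trans (mgraph n) (@switch_step n) M1 M2 \/
  Relation_Operators.clos_refl_trans (mgraph n) (@switch_step n) M2 M1.

(* Main.v *)
Require Import Defs.
From mathcomp Require Import all_boot all_order all_algebra all_field.
From mathcomp Require Import ring lra zify.
From Stdlib Require Import Relations.
Import Order.TTheory GRing.Theory Num.Theory.
Local Open Scope ring_scope.

Lemma sqrt3_conj : (sqrtC 3 : algC)^* = sqrtC 3.
Proof. by apply/CrealP; apply: ger0_real; rewrite sqrtC_ge0 ler0n. Qed.

Lemma omegabE : omegab = 1 - omega.
Proof.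
rewrite /omegab /omega rmorphM rmorphD /= rmorphM /= conjCi sqrt3_conj rmorph1 fmorphV /=.
rewrite (_ : (2:algC)^* = 2) ?conjC_nat //.
by field.
Qed.

Lemma omega2 : omega ^+ 2 = omega - 1.
Proof.
rewrite /omega.
have h3 : sqrtC (3:algC) ^+ 2 = 3 by rewrite sqrtCK.
have hi : ('i : algC) ^+ 2 = -1 by rewrite sqrCi.
rewrite expr_div_n (_ : (1 + 'i * sqrtC 3) ^+ 2 = 1 + 2 * ('i * sqrtC 3) + 'i ^+ 2 * sqrtC 3 ^+ 2); last by ring.
rewrite hi h3; by field.
Qed.

Lemma omega_nreal : omega \notin Num.real.
Proof.
apply/negP => hr.
have h : (2 * omega - 1) \is Num.real by apply: rpredB; [apply: rpredM => //; apply: rpred_nat | apply: rpred1].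
move: h; rewrite realEsqr.
have -> : (2 * omega - 1) ^+ 2 = 4 * omega ^+ 2 - 4 * omega + 1 by ring.
rewrite omega2 (_ : 4 * (omega - 1) - 4 * omega + 1 = - 3); last by ring.
rewrite oppr_ge0 => h; have h3 : (0:algC) < 3 by rewrite ltr0n.
by move: (lt_le_trans h3 h); rewrite ltxx.
Qed.

Lemma omega_lin (a b : algC) : a \is Num.real -> b \is Num.real ->
  a * omega + b = 0 -> a = 0 /\ b = 0.
Proof.
move=> ha hb e.
have [a0|an0] := eqVneq a 0.
  by move: e; rewrite a0 mul0r add0r.
exfalso; move/negP: omega_nreal; apply.
have hb' : b = - (a * omega) by rewrite -(addKr (a*omega) b) e addr0.
have -> : omega = - b / a by rewrite hb' opprK mulrC mulKf.
by rewrite rpredM ?rpredN ?rpredV.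
Qed.

Lemma omega3 : omega ^+ 3 = -1.
Proof. by rewrite exprS omega2; have := omega2; rewrite expr2 => h; rewrite mulrBr h mulr1; ring. Qed.

Lemma omega6 : omega ^+ 6 = 1.
Proof. by rewrite (_ : 6 = 3 * 2)%N // exprM omega3 expr2 mulrNN mulr1. Qed.

Lemma omega_mod k : omega ^+ k = omega ^+ (k %% 6).
Proof. by rewrite (expr_mod k omega6). Qed.

Definition wa (k : nat) : int := nth 0 [:: 0; 1; 1; 0; -1; -1]%R k.
Definition wb (k : nat) : int := nth 0 [:: 1; 0; -1; -1; 0; 1]%R k.

Lemma omega_pow_lin k : (k < 6)%N -> omega ^+ k = (wa k)%:~R * omega + (wb k)%:~R.
Proof.
have o2 := omega2; have o3 := omega3.
case: k => [|[|[|[|[|[|k]]]]]] // _; rewrite /wa /wb /=.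
- by rewrite expr0; ring.
- by rewrite expr1; ring.
- by rewrite o2; ring.
- by rewrite o3; ring.
- by rewrite exprS o3; ring.
- by rewrite (_ : 5 = 2 + 3)%N // exprD o3 o2; ring.
Qed.

Lemma omega_pow_inj a b : (a < 6)%N -> (b < 6)%N -> omega ^+ a = omega ^+ b -> a = b.
Proof.
move=> ha hb; rewrite !omega_pow_lin // => e.
have : ((wa a)%:~R - (wa b)%:~R) * omega + ((wb a)%:~R - (wb b)%:~R) = 0 :> algC.
  transitivity (((wa a)%:~R * omega + (wb a)%:~R) - ((wa b)%:~R * omega + (wb b)%:~R) : algC); first by ring.
  by rewrite e subrr.
case/omega_lin; rewrite ?rpredB ?Rreal_int ?intr_int //.
move=> /eqP; rewrite subr_eq0 => /eqP /intr_inj e1 /eqP; rewrite subr_eq0 => /eqP /intr_inj e2.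
move: a b ha hb e1 e2 {e}.
by do 6?[case=> //]; do 6?[case=> //].
Qed.

Lemma omega_eqE x y : (omega ^+ x == omega ^+ y) = (x %% 6 == y %% 6)%N.
Proof.
rewrite (omega_mod x) (omega_mod y).
apply/eqP/eqP => [|->//]; apply: omega_pow_inj; exact: ltn_pmod.
Qed.

Lemma omegab5 : omegab = omega ^+ 5.
Proof. by rewrite omegabE omega_pow_lin // /wa /wb /=; ring. Qed.

Lemma omegaN : - omega = omega ^+ 4.
Proof. by rewrite omega_pow_lin //= /wa /wb /=; ring. Qed.

Lemma omega_conj : omega^* = omega ^+ 5.
Proof. exact: omegab5. Qed.

Lemma omega_conjX k : (omega ^+ k)^* = omega ^+ (5 * k).
Proof. by rewrite rmorphXn /= omega_conj -exprM. Qed.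

Lemma T6P z : reflect (exists2 k, (k < 6)%N & z = omega ^+ k) (z \in T6).
Proof.
apply: (iffP idP).
  rewrite /T6 !inE omegab5 => /orP[/eqP->|/orP[/eqP->|/orP[/eqP->|/orP[/eqP->|/orP[/eqP->|/eqP->]]]]].
  - by exists 0%N; rewrite ?expr0.
  - by exists 3%N; rewrite ?omega3.
  - by exists 1%N; rewrite ?expr1.
  - by exists 5%N.
  - by exists 4%N; rewrite ?omegaN.
  - by exists 2%N; rewrite // omega_pow_lin //= /wa /wb /=; rewrite omega_pow_lin //= /wa /wb /=; ring.
case=> k hk ->; rewrite /T6 !inE omegab5.
move: hk; case: k => [|[|[|[|[|[|k]]]]]] // _.
- by rewrite expr0 eqxx.
- by rewrite expr1 eqxx !orbT.
- by rewrite -[X in _ == X]opprK (_ : - omega ^+ 5 = omega ^+ 2) ?eqxx ?orbT // !omega_pow_lin //= /wa /wb /=; ring.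
- by rewrite omega3 eqxx !orbT.
- by rewrite -omegaN eqxx !orbT.
- by rewrite eqxx !orbT.
Qed.

Lemma T6_mulX k z : z \in T6 -> omega ^+ k * z \in T6.
Proof.
case/T6P=> j _ ->; apply/T6P; exists ((k + j) %% 6)%N; first exact: ltn_pmod.
by rewrite -omega_mod exprD.
Qed.

Lemma T6_neq0 z : z \in T6 -> z != 0.
Proof. by case/T6P=> k _ ->; rewrite expf_neq0 //; apply/negP => /eqP h; move: omega_nreal; rewrite h rpred0. Qed.

Lemma T6_norm z : z \in T6 -> z * z^* = 1.
Proof.
case/T6P=> k _ ->; rewrite omega_conjX -exprD (_ : k + 5 * k = 6 * k)%N; last by rewrite mulSn.
by rewrite exprM omega6 expr1n.
Qed.

Module SpecM.
Local Open Scope sesquilinear_scope.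

Section Spec.
Variables (n : nat) (B : 'M[algC]_n).
Hypothesis hB : B \is hermsymmx.
Let P := spectralmx B.
Let d := spectral_diag B.

Lemma sp_unit : P *m P^t* = 1%:M.
Proof. exact/unitarymxP/spectral_unitarymx. Qed.

Lemma sp_unit' : P^t* *m P = 1%:M.
Proof. by rewrite -invmx_unitary ?spectral_unitarymx // mulVmx // spectral_unit. Qed.

Lemma sp_decomp : B = P^t* *m diag_mx d *m P.
Proof.
rewrite -invmx_unitary ?spectral_unitarymx //.
by apply/orthomx_spectralP; apply: hermitian_normalmx.
Qed.

Lemma sp_real i : d 0 i \is Num.real.
Proof. by have /mxOverP := hermitian_spectral_diag_real hB; apply. Qed.

Lemma sp_PB : P *m B = diag_mx d *m P.
Proof. by rewrite {1}sp_decomp !mulmxA sp_unit mul1mx. Qed.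

Lemma sp_eig i : eigenvalue B (d 0 i).
Proof.
apply/eigenvalueP; exists (row i P).
  by rewrite -row_mul sp_PB mul_diag_mx; apply/rowP => j; rewrite !mxE.
apply/negP => /eqP h0.
have := congr1 (fun A : 'M_n => A i i) sp_unit; rewrite !mxE eqxx /=.
rewrite big1 => [|j _]; first by move/eqP; rewrite eq_sym oner_eq0.
by have := congr1 (fun r : 'rV_n => r 0 j) h0; rewrite !mxE => ->; rewrite mul0r.
Qed.

Lemma sp_eig_inv a : eigenvalue B a -> exists i, a = d 0 i.
Proof.
case/eigenvalueP => v hv vn0.
set y := v *m P^t*.
have hy : y *m diag_mx d = a *: y.
  rewrite /y -(mulmx1 (diag_mx d)) -sp_unit !mulmxA.
  have -> : v *m P^t* *m diag_mx d *m P = v *m B by rewrite sp_decomp !mulmxA.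
  by rewrite hv scalemxAl.
have : y != 0.
  apply: contraNneq vn0 => y0.
  by rewrite -(mulmx1 v) -sp_unit' mulmxA -/y y0 mul0mx.
clearbody y; case/rV0Pn => i yi; exists i.
have := congr1 (fun r : 'rV_n => r 0 i) hy; rewrite mul_mx_diag !mxE.
by move=> e; apply: (mulfI yi); rewrite e mulrC.
Qed.

Definition Qf (A : 'M[algC]_n) (x : 'rV[algC]_n) : algC := (x *m A *m x^t*) 0 0.

Lemma rayleigh (l : algC) (x : 'rV_n) : (forall i, d 0 i <= l) ->
  Qf B x <= l * Qf 1%:M x /\ (Qf B x = l * Qf 1%:M x -> x *m B = l *: x).
Proof.
move=> hl.
set y := x *m P^t*.
have hyt : y^t* = P *m x^t* by rewrite /y trmx_mul map_mxM trmxCK.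
have e1 : Qf B x = \sum_i d 0 i * (y 0 i * (y 0 i)^*).
  rewrite /Qf sp_decomp !mulmxA -/y -mulmxA -hyt mul_mx_diag !mxE.
  by apply: eq_bigr => i _; rewrite !mxE; ring.
have e2 : Qf 1%:M x = \sum_i (y 0 i * (y 0 i)^*).
  rewrite /Qf; have -> : x *m 1%:M *m x^t* = y *m y^t*.
    by rewrite hyt mulmx1 /y mulmxA -(mulmxA x) sp_unit' mulmx1.
  by rewrite mxE; apply: eq_bigr => i _; rewrite !mxE.
have e3 : l * Qf 1%:M x - Qf B x = \sum_i (l - d 0 i) * (y 0 i * (y 0 i)^*).
  rewrite e1 e2 mulr_sumr -sumrB; apply: eq_bigr => i _; ring.
have hge : forall i, 0 <= (l - d 0 i) * (y 0 i * (y 0 i)^*).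
  by move=> i; rewrite mulr_ge0 ?mul_conjC_ge0 // subr_ge0.
split.
  by rewrite -subr_ge0 e3 sumr_ge0.
move=> heq.
have hs : \sum_i (l - d 0 i) * (y 0 i * (y 0 i)^*) = 0 by rewrite -e3 heq subrr.
have gen : forall z : 'rV_n, (forall i, z 0 i * d 0 i = l * z 0 i) -> z *m diag_mx d = l *: z.
  by move=> z hz; apply/rowP => i; rewrite mul_mx_diag !mxE hz.
have hyd : y *m diag_mx d = l *: y.
  apply: gen => i.
  have := psumr_eq0P (fun i _ => hge i) hs (isT : true) (i := i).
  move/eqP; rewrite mulf_eq0 => /orP [|].
    by rewrite subr_eq0 => /eqP ->; rewrite mulrC.
  by rewrite mul_conjC_eq0 => /eqP ->; rewrite !mul0r mulr0.
by rewrite sp_decomp !mulmxA -/y hyd -scalemxAl -(mulmxA x) sp_unit' mulmx1.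
Qed.

End Spec.

Lemma seq_max (s : seq algC) : all (fun x => x \is Num.real) s -> s != [::] ->
  exists2 m, m \in s & forall y, y \in s -> y <= m.
Proof.
elim: s => [//|a s IH] /= /andP [ha hs] _.
have [->|sn] := eqVneq s [::].
  by exists a; rewrite ?mem_head // => y; rewrite inE => /eqP ->.
have [m ms hm] := IH hs sn.
have hmr : m \is Num.real by move/allP: hs; apply.
have [am|ma] := boolP (a <= m).
  exists m; first by rewrite inE ms orbT.
  by move=> y; rewrite inE => /orP [/eqP ->|/hm].
have ma' : m <= a by move: (real_leVge ha hmr); rewrite (negbTE ma).
exists a; first by rewrite mem_head.
by move=> y; rewrite inE => /orP [/eqP ->|/hm hy]; [exact: lexx| exact: le_trans hy ma'].
Qed.

Lemma lambda1_exists n (B : 'M[algC]_n) : (0 < n)%N -> B \is hermsymmx ->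
  exists l, is_lambda1 B l.
Proof.
move=> hn hB.
have h1 : all (fun x => x \is Num.real) [seq spectral_diag B 0 i | i <- enum 'I_n].
  by apply/allP => x /mapP [i _ ->]; apply: (@sp_real _ _ hB).
have h2 : [seq spectral_diag B 0 i | i <- enum 'I_n] != [::].
  by rewrite -size_eq0 size_map size_enum_ord -lt0n.
have [m hm hmax] := @seq_max _ h1 h2.
exists m; split.
  by case/mapP: hm => i _ ->; apply: (@sp_eig _ _ hB).
move=> a /(@sp_eig_inv _ _ hB) [i ->]; apply: hmax.
by apply/mapP; exists i; rewrite ?mem_enum.
Qed.

Lemma lambda1_bound n (B : 'M[algC]_n) l : B \is hermsymmx -> is_lambda1 B l ->
  forall i, spectral_diag B 0 i <= l.
Proof. by move=> hB [_ h] i; apply: h; apply: (@sp_eig _ _ hB). Qed.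

Lemma lambda1_real n (B : 'M[algC]_n) l : B \is hermsymmx -> is_lambda1 B l ->
  l \is Num.real.
Proof. by move=> hB [/(@sp_eig_inv _ _ hB) [i ->] _]; apply: (@sp_real _ _ hB). Qed.

End SpecM.
Import SpecM.

Lemma cp_sim n (A P Q : 'M[algC]_n) : P *m Q = 1%:M ->
  char_poly (P *m A *m Q) = char_poly A.
Proof.
move=> hPQ.
rewrite /char_poly /char_poly_mx.
have -> : 'X%:M - map_mx polyC (P *m A *m Q) =
   map_mx polyC P *m ('X%:M - map_mx polyC A) *m map_mx polyC Q.
  rewrite mulmxBr mulmxBl !map_mxM; congr (_ - _).
  by rewrite mul_mx_scalar -scalemxAl -map_mxM hPQ map_mx1 scalemx1.
rewrite !det_mulmx mulrC mulrA -det_mulmx -map_mxM.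
have -> : Q *m P = 1%:M by apply/eqP; rewrite mulmx1C // hPQ.
by rewrite map_mx1 det1 mul1r.
Qed.

Lemma cp_tr n (A : 'M[algC]_n) : char_poly A^T = char_poly A.
Proof.
rewrite /char_poly /char_poly_mx -det_tr; congr (\det _).
by rewrite linearB /= tr_scalar_mx map_trmx trmxK.
Qed.

Lemma Nmat_entry n (X : mgraph n) u v : Nmat X u v =
  if mA X u v then omega ^+ 1 else if mA X v u then omega ^+ 5
  else if mE X u v then omega ^+ 0 else 0.
Proof. by rewrite mxE expr1 expr0 -omegab5. Qed.

Lemma switch_entry n (X : mgraph n) p u v : mgraph_wf X -> admissible X p ->
  (if switch_arcs X p u v then omega ^+ 1 else if switch_arcs X p v u then omega ^+ 5
   else if mE X u v then omega ^+ 0 else 0)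
  = (p u)^* * Nmat X u v * p v.
Proof.
case=> [[Esym _] [AE Aanti]] [hT [hU hA]].
move: (hU u v) (hU v u) (hA u v) (hA v u) (AE u v) (AE v u) (Aanti u v).
rewrite Nmat_entry /switch_arcs /undir (Esym v u).
case/T6P: (hT u) => a ha ->; case/T6P: (hT v) => b hb ->.
rewrite omega_conjX omegab5 omegaN -!exprS -!exprD !omega_eqE.
case: (mE X u v); case: (mA X u v); case: (mA X v u) => //= h1 h2 h3 h4 h5 h6 h7;
  rewrite ?mulr0 ?mul0r //;
  repeat (case: ifP => ?);
  first [ by rewrite ?mulr0 ?mul0r
        | (exfalso; lia)
        | (rewrite -!exprD; apply/eqP; rewrite omega_eqE; apply/eqP; lia) ].
Qed.

Lemma switch_wf n (X Y : mgraph n) p : mgraph_wf X -> admissible X p ->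
  (forall x y, mE Y x y = mE X x y) -> (forall x y, mA Y x y = switch_arcs X p x y) ->
  mgraph_wf Y.
Proof.
move=> wfX adm hE hA'.
have [[Esym Eirr] [AE Aanti]] := wfX.
have [hT [hU hA]] := adm.
split; [split|split].
- by move=> u v; rewrite !hE Esym.
- by move=> u; rewrite hE Eirr.
- move=> u v; rewrite hA' hE /switch_arcs /undir.
  case/or3P => [/andP [/andP [->]] //|/andP [/AE ->] //|/andP [/AE]]; by rewrite Esym.
- move=> u v; rewrite !hA'.
  move: (hU u v) (hU v u) (hA u v) (hA v u) (AE u v) (AE v u) (Aanti u v) (Aanti v u).
  rewrite /switch_arcs /undir (Esym v u).
  case/T6P: (hT u) => a ha ->; case/T6P: (hT v) => b hb ->.
  rewrite omegab5 omegaN -!exprS -!exprD !omega_eqE.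
  case: (mE X u v); case: (mA X u v); case: (mA X v u) => //= h1 h2 h3 h4 h5 h6 h7 h8;
  lia.
Qed.

Lemma step_inv n (X Y : mgraph n) : mgraph_wf X -> switch_step X Y ->
  mgraph_wf Y /\ char_poly (Nmat Y) = char_poly (Nmat X).
Proof.
move=> wfX [hE [[p [adm hA']]|hC]].
  split; first exact: switch_wf wfX adm hE hA'.
  have [hT _] := adm.
  set D := diag_mx (\row_u p u).
  set D' := diag_mx (\row_u (p u)^*).
  have hDD : D' *m D = 1%:M.
    rewrite /D /D' mulmx_diag; apply/matrixP => u v; rewrite !mxE.
    case: eqP => [->|]; last by rewrite mulr0n.
    by rewrite mulrC T6_norm.
  have -> : Nmat Y = D' *m Nmat X *m D.
    apply/matrixP => u v.
    rewrite Nmat_entry !hA' hE switch_entry // mul_mx_diag mul_diag_mx !mxE.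
    by [].
  by rewrite cp_sim.
have [[Esym Eirr] _] := wfX.
split.
  split; [split|split].
  - by move=> u v; rewrite !hE Esym.
  - by move=> u; rewrite hE Eirr.
  - by move=> u v; rewrite hC hE Esym; case: wfX => _ [AE _]; apply: AE.
  - by move=> u v; rewrite !hC; case: wfX => _ [_ AA]; apply: AA.
have -> : Nmat Y = (Nmat X)^T.
  by apply/matrixP => u v; rewrite !mxE !hC !hE (Esym v u).
by rewrite cp_tr.
Qed.

Lemma Nmat_herm n (X : mgraph n) : mgraph_wf X -> Nmat X \is hermsymmx.
Proof.
case=> [[Esym _] [_ AA]].
apply/is_hermitianmxP; rewrite expr0 scale1r; apply/matrixP => u v.
rewrite !mxE (Esym v u).
case h1: (mA X u v); case h2: (mA X v u) => //=.
- by have := AA _ _ h1; rewrite h2.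
- by rewrite /omegab conjCK.
- by case: (mE X u v); rewrite ?rmorph1 ?rmorph0.
Qed.

Lemma of_graph_wf n (G : rel 'I_n) : simple_graph G -> mgraph_wf (of_graph G).
Proof. by move=> sG; split => //. Qed.

Lemma crt_inv n (X Y : mgraph n) :
  Relation_Operators.clos_refl_trans (mgraph n) (@switch_step n) X Y ->
  mgraph_wf X -> mgraph_wf Y /\ char_poly (Nmat Y) = char_poly (Nmat X).
Proof.
elim => [x y hs wx|x wx|x y z _ IH1 _ IH2 wx].
- exact: step_inv.
- by [].
- have [wy e1] := IH1 wx; have [wz e2] := IH2 wy.
  by split => //; rewrite e2.
Qed.

Lemma eig_mup n (A : 'M[algC]_n) a : eigenvalue A a = (0 < mup a (char_poly A))%N.
Proof.
by rewrite eigenvalue_root_char mup_geq ?monic_neq0 ?char_poly_monic // expr1 dvdp_XsubCl.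
Qed.

Lemma ab n (G : rel 'I_n) (M : mgraph n) : (0 < n)%N -> simple_graph G -> mgraph_wf M ->
  cospectral (Nmat (of_graph G)) (Nmat M) ->
  exists l, is_lambda1 (Nmat (of_graph G)) l /\ is_lambda1 (Nmat M) l.
Proof.
move=> hn sG wM hc.
have [l [hl1 hl2]] := @lambda1_exists _ _ hn (@Nmat_herm _ _ (@of_graph_wf _ _ sG)).
have he : forall a, eigenvalue (Nmat (of_graph G)) a = eigenvalue (Nmat M) a.
  by move=> a; rewrite !eig_mup hc.
exists l; split; split => //; first by rewrite -he.
by move=> m; rewrite -he; apply: hl2.
Qed.

Lemma da n (G : rel 'I_n) (M : mgraph n) : simple_graph G -> mgraph_wf M ->
  switching_equivalent (of_graph G) M -> cospectral (Nmat (of_graph G)) (Nmat M).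
Proof.
move=> sG wM [h|h] x.
  by have [_ ->] := @crt_inv _ _ _ h (@of_graph_wf _ _ sG).
by have [_ ->] := @crt_inv _ _ _ h wM.
Qed.

Lemma cd n (G : rel 'I_n) (M : mgraph n) : simple_graph G -> mgraph_wf M ->
  (forall u v, mE M u v = G u v) ->
  (exists p : 'I_n -> algC,
          T6_partition p /\
          (forall u v, p u = p v -> ~~ mA M u v) /\
          (forall u v, mE M u v -> p u != p v ->
             (mA M u v && (p v == omegab * p u)) ||
             (mA M v u && (p u == omegab * p v)))) ->
  switching_equivalent (of_graph G) M.
Proof.
move=> [Gsym Girr] [_ [AE AA]] hE [p [hT [C1 C2]]].
have c1 : forall u v, (p u == p v) ==> ~~ mA M u v.
  by move=> u v; apply/implyP => /eqP /C1.
have c2 : forall u v, G u v ==> (p u != p v) ==>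
   ((mA M u v && (p v == omegab * p u)) || (mA M v u && (p u == omegab * p v))).
  by move=> u v; apply/implyP; rewrite -hE => h; apply/implyP; apply: C2.
have ae : forall u v, mA M u v ==> G u v.
  by move=> u v; apply/implyP; rewrite -hE; apply: AE.
have aa : forall u v, mA M u v ==> ~~ mA M v u.
  by move=> u v; apply/implyP; apply: AA.
left.
apply: (@Relation_Operators.rt_trans _ _ _ (MGraph G (switch_arcs (of_graph G) p))).
  apply: Relation_Operators.rt_step; split => //; left; exists p; split => //.
  split => //; split => // u v.
  rewrite /undir /= !andbT => guv.
  move: (c2 u v); rewrite guv /=.
  case/T6P: (hT u) => a ha ->; case/T6P: (hT v) => b hb ->.
  rewrite omegab5 -!exprS -!exprD !omega_eqE.
  case: (mA M u v); case: (mA M v u) => /=; lia.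
apply: Relation_Operators.rt_step; split => //=; right => x y.
rewrite /switch_arcs /undir /= ?andbT ?andbF ?orbF (Gsym y x).
move: (c1 x y) (c1 y x) (c2 x y) (c2 y x) (ae x y) (ae y x) (aa x y) (aa y x).
rewrite (Gsym y x).
case/T6P: (hT x) => a ha ->; case/T6P: (hT y) => b hb ->.
rewrite omegab5 -!exprS -!exprD !omega_eqE.
case: (mA M x y); case: (mA M y x); case: (G x y) => /=; lia.
Qed.

Arguments Qf {n}.
Arguments rayleigh {n B} hB l x.
Arguments lambda1_bound {n B l} hB.
Arguments Nmat_herm {n X}.
Arguments of_graph_wf {n G}.

Lemma QfE n (B : 'M[algC]_n) z : Qf B z = \sum_u \sum_v z 0 u * B u v * (z 0 v)^*.
Proof.
rewrite /Qf !mxE exchange_big /=; apply: eq_bigr => v _.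
rewrite ?mxE mulr_suml; apply: eq_bigr => u _; by rewrite ?mxE.
Qed.

Lemma Qf1E n (z : 'rV[algC]_n) : Qf 1%:M z = \sum_u z 0 u * (z 0 u)^*.
Proof.
rewrite /Qf mulmx1 !mxE; apply: eq_bigr => u _; by rewrite !mxE.
Qed.

Lemma re_eq (s t : algC) : s \is Num.real -> `|t| <= s -> 'Re (s - t) = 0 -> t = s.
Proof.
move=> sr hts; rewrite raddfB /= (Creal_ReP _ sr) => /eqP; rewrite subr_eq0 => /eqP es.
have h1 : 'Re t <= `|t| := (leif_Re_Creal t).1.
have h2 : 'Re t = `|t| by apply: le_anti; rewrite h1 -es.
have : 0 <= t by rewrite -(leif_Re_Creal t).2 h2.
move=> /ger0_real /Creal_ReP <-; by rewrite es.
Qed.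

Lemma T6_normr z : z \in T6 -> `|z| = 1.
Proof.
move=> hz; apply/eqP; rewrite -sqrp_eq1 ?normr_ge0 // normCK T6_norm //.
Qed.

Lemma omega_normr k : `|omega ^+ k| = 1.
Proof. apply: T6_normr; rewrite -(mulr1 (omega ^+ k)); apply: T6_mulX; by rewrite inE eqxx. Qed.

Lemma bc n (G : rel 'I_n) (M : mgraph n) : (0 < n)%N ->
  simple_graph G -> connected_graph G -> mgraph_wf M ->
  (forall u v, mE M u v -> G u v) ->
  (exists l, is_lambda1 (Nmat (of_graph G)) l /\ is_lambda1 (Nmat M) l) ->
  (forall u v, mE M u v = G u v) /\
        exists p : 'I_n -> algC,
          T6_partition p /\
          (forall u v, p u = p v -> ~~ mA M u v) /\
          (forall u v, mE M u v -> p u != p v ->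
             (mA M u v && (p v == omegab * p u)) ||
             (mA M v u && (p u == omegab * p v))).
Proof.
move=> hn sG cG wM sub [l [lA lH]].
have [Gsym Girr] := sG; have [[Esym Eirr] [AE AA]] := wM.
set A := Nmat (of_graph G); set H := Nmat M.
have hAh : A \is hermsymmx := Nmat_herm (of_graph_wf sG).
have bnd := lambda1_bound hAh lA.
case: lH => /eigenvalueP [x hx xn0] _.
set y : 'rV[algC]_n := \row_u `|x 0 u|.
have yE : forall u, y 0 u = `|x 0 u| by move=> u; rewrite mxE.
have [ray1 ray2] := rayleigh hAh l y bnd.
have Aent : forall u v, A u v = (G u v)%:R by move=> u v; rewrite mxE /=; case: (G u v).
have Hent0 : forall u v, ~~ mE M u v -> H u v = 0.
  move=> u v he; rewrite mxE.
  have -> : mA M u v = false by apply/negP => /AE; apply/negP.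
  have -> : mA M v u = false by apply/negP => /AE; rewrite Esym; apply/negP.
  by rewrite (negbTE he).
have Hnorm : forall u v, mE M u v -> `|H u v| = 1.
  by move=> u v he; rewrite Nmat_entry he; case: ifP => _; [|case: ifP => _]; apply: omega_normr.
have Ale : forall u v, `|H u v| <= A u v.
  move=> u v; rewrite Aent; have [he|he] := boolP (mE M u v).
    by rewrite Hnorm // sub.
  by rewrite Hent0 // normr0 ler0n.
pose t u v := x 0 u * H u v * (x 0 v)^*.
pose s u v := `|x 0 u| * A u v * `|x 0 v|.
have Qx : Qf H x = \sum_u \sum_v t u v by rewrite QfE.
have Qy : Qf A y = \sum_u \sum_v s u v.
  by rewrite QfE; apply: eq_bigr => u _; apply: eq_bigr => v _; rewrite !yE conj_normC.
have Q1 : Qf 1%:M y = Qf 1%:M x.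
  by rewrite !Qf1E; apply: eq_bigr => u _; rewrite yE conj_normC -expr2 normCK.
have QH : Qf H x = l * Qf 1%:M x.
  by rewrite /Qf hx -scalemxAl mxE mulmx1.
have tle : forall u v, `|t u v| <= s u v.
  move=> u v; rewrite /t /s !normrM norm_conjC.
  by rewrite ler_wpM2r ?normr_ge0 // ler_wpM2l ?normr_ge0.
have sge : forall u v, 0 <= s u v.
  by move=> u v; rewrite /s Aent !mulr_ge0 ?normr_ge0 ?ler0n.
have reg : forall u v, 0 <= 'Re (s u v - t u v).
  move=> u v; rewrite raddfB /= (Creal_ReP _ (ger0_real (sge u v))) subr_ge0.
  exact: le_trans (leif_Re_Creal _).1 (tle u v).
pose w := Qf A y - l * Qf 1%:M y.
have wle : w <= 0 by rewrite /w subr_le0.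
have wsum : w = \sum_u \sum_v (s u v - t u v).
  by rewrite /w Qy Q1 -QH Qx -sumrB; apply: eq_bigr => u _; rewrite sumrB.
have Rew : 'Re w = \sum_u \sum_v 'Re (s u v - t u v).
  by rewrite wsum raddf_sum; apply: eq_bigr => u _; rewrite raddf_sum.
have ww : w = 0.
  apply: le_anti; rewrite wle /= -(Creal_ReP _ (ler0_real wle)) Rew.
  by apply: sumr_ge0 => u _; apply: sumr_ge0 => v _.
have yA : y *m A = l *: y by apply: ray2; apply/eqP; rewrite -subr_eq0 -/w ww.
have Re0 : forall u v, 'Re (s u v - t u v) = 0.
  move=> u v.
  have h1 : \sum_u \sum_v 'Re (s u v - t u v) = 0 by rewrite -Rew ww raddf0.
  have h2 := psumr_eq0P (fun u _ => sumr_ge0 _ (fun v _ => reg u v)) h1 (isT : true) (i := u).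
  exact: (psumr_eq0P (fun v _ => reg u v) h2 (isT : true) (i := v)).
have ts : forall u v, t u v = s u v.
  by move=> u v; apply: re_eq; [apply: ger0_real|apply: tle|apply: Re0].
have z0 : forall u v, G u v -> x 0 v = 0 -> x 0 u = 0.
  move=> u v guv xv.
  have e : \sum_k y 0 k * A k v = 0.
    have := congr1 (fun r : 'rV_n => r 0 v) yA; rewrite !mxE => ->.
    by rewrite ?yE xv normr0 mulr0.
  have hge : forall k : 'I_n, true -> 0 <= y 0 k * A k v.
    by move=> k _; rewrite yE Aent mulr_ge0 ?normr_ge0 ?ler0n.
  have := psumr_eq0P hge e (isT : true) (i := u).
  by rewrite yE Aent guv mulr1 => /normr0_eq0.
have closed0 : closed G [pred u | x 0 u == 0].
  move=> u v guv /=; apply/eqP/eqP => h.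
    by apply: (z0 v u) => //; rewrite Gsym.
  exact: z0 guv h.
have [u0 xu0] : exists u0, x 0 u0 != 0.
  by case/rV0Pn: xn0 => u0 h; exists u0.
have xnz : forall u, x 0 u != 0.
  move=> u; have := closed_connect closed0 (cG u0 u).
  by rewrite !inE (negbTE xu0) => <-.
have hEG : forall u v, mE M u v = G u v.
  move=> u v; apply/idP/idP; first exact: sub.
  move=> guv; apply/negPn/negP => he.
  have := ts u v; rewrite /t /s Hent0 // mulr0 mul0r Aent guv mulr1 => /esym /eqP.
  by rewrite mulf_eq0 !normr_eq0 (negbTE (xnz u)) (negbTE (xnz v)).
split; first exact: hEG.
pose r := Ordinal hn.
pose p u := (x 0 u)^* * x 0 r / (`|x 0 u| * `|x 0 r|).
have HH : forall u v, mE M u v -> H u v * (H u v)^* = 1.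
  by move=> u v he; rewrite -normCK Hnorm // expr1n.
have pedge : forall u v, mE M u v -> p v = (H u v)^* * p u.
  move=> u v he.
  have e := ts u v; rewrite /t /s Aent -hEG he mulr1 in e.
  have nu : `|x 0 u| != 0 by rewrite normr_eq0 xnz.
  have nv : `|x 0 v| != 0 by rewrite normr_eq0 xnz.
  have nr : `|x 0 r| != 0 by rewrite normr_eq0 xnz.
  have key : `|x 0 u| * (x 0 v)^* = (H u v)^* * (x 0 u)^* * `|x 0 v|.
    apply: (mulfI nu).
    have hu2 : `|x 0 u| * `|x 0 u| = x 0 u * (x 0 u)^* by rewrite -expr2 normCK.
    rewrite mulrA hu2.
    transitivity ((x 0 u * H u v * (x 0 v)^*) * ((x 0 u)^* * (H u v)^*)).
      have := HH u v he; move=> hh.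
      rewrite -[LHS]mulr1 -hh; ring.
    by rewrite e; ring.
  have key' : (H u v)^* * (x 0 u)^* = `|x 0 u| * (x 0 v)^* / `|x 0 v| by rewrite key mulfK.
  rewrite /p !mulrA key'; field.
  by rewrite nr nu nv.
have hconj : forall u v, mE M u v -> exists k, (H u v)^* = omega ^+ k.
  move=> u v he; rewrite /H Nmat_entry he.
  by case: ifP => _; [|case: ifP => _]; eexists; rewrite omega_conjX.
have pr : p r = 1.
  have nr : `|x 0 r| != 0 by rewrite normr_eq0 xnz.
  by rewrite /p (mulrC (x 0 r)^*) -normCK expr2 divff // mulf_neq0.
clearbody p.
have closedT : closed G [pred u | p u \in T6].
  move=> u v guv; rewrite [u \in _]inE [v \in _]inE; apply/idP/idP => h.
    have he : mE M u v by rewrite hEG.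
    by have [k hk] := hconj u v he; rewrite (pedge u v he) hk; apply: T6_mulX.
  have he : mE M v u by rewrite hEG Gsym.
  by have [k hk] := hconj v u he; rewrite (pedge v u he) hk; apply: T6_mulX.
have pT : forall u, p u \in T6.
  move=> u; have := closed_connect closedT (cG r u).
  by rewrite !inE pr eqxx /= => <-.
exists p; split => //; split.
  move=> u v /eqP puv; apply/negP => huv.
  have he := AE u v huv.
  case/T6P: (pT u) => a ha eu; case/T6P: (pT v) => b hb ev.
  move: puv (pedge u v he); rewrite /H Nmat_entry huv omega_conjX eu ev -exprD omega_eqE.
  move=> h1 /eqP; rewrite omega_eqE; lia.
move=> u v he.
case/T6P: (pT u) => a ha eu; case/T6P: (pT v) => b hb ev.
have aa1 := AA u v; have aa2 := AA v u.
move: (pedge u v he) aa1 aa2; rewrite /H Nmat_entry he eu ev omegab5.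
case: (mA M u v); case: (mA M v u) => /=; rewrite omega_conjX -!exprD !omega_eqE;
  move=> /eqP; rewrite omega_eqE => h1 h2 h3; try lia.
Qed.

Theorem theorem4p3 (n : nat) (G : rel 'I_n) (M : mgraph n) :
  (0 < n)%N ->
  simple_graph G -> connected_graph G ->
  mgraph_wf M ->
  (forall u v, mE M u v -> G u v) ->
  [/\ (cospectral (Nmat (of_graph G)) (Nmat M) <->
       exists l, is_lambda1 (Nmat (of_graph G)) l /\ is_lambda1 (Nmat M) l),
      ((exists l, is_lambda1 (Nmat (of_graph G)) l /\ is_lambda1 (Nmat M) l) <->
       ((forall u v, mE M u v = G u v) /\
        exists p : 'I_n -> algC,
          T6_partition p /\
          (forall u v, p u = p v -> ~~ mA M u v) /\
          (forall u v, mE M u v -> p u != p v ->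
             (mA M u v && (p v == omegab * p u)) ||
             (mA M v u && (p u == omegab * p v))))) &
      ((forall u v, mE M u v = G u v) /\
        (exists p : 'I_n -> algC,
          T6_partition p /\
          (forall u v, p u = p v -> ~~ mA M u v) /\
          (forall u v, mE M u v -> p u != p v ->
             (mA M u v && (p v == omegab * p u)) ||
             (mA M v u && (p u == omegab * p v))))
       <-> switching_equivalent (of_graph G) M)].
Proof.
move=> hn sG cG wM sub.
have hab := @ab n G M hn sG wM.
have hbc := @bc n G M hn sG cG wM sub.
have hcd : forall c : (forall u v, mE M u v = G u v) /\
        (exists p : 'I_n -> algC,
          T6_partition p /\
          (forall u v, p u = p v -> ~~ mA M u v) /\
          (forall u v, mE M u v -> p u != p v ->
             (mA M u v && (p v == omegab * p u)) ||
             (mA M v u && (p u == omegab * p v)))),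
    switching_equivalent (of_graph G) M.
  by move=> [hE hp]; apply: (@cd n G M sG wM hE hp).
have hda := @da n G M sG wM.
split; split.
- exact: hab.
- by move=> hb; apply: hda; apply: hcd; apply: hbc.
- exact: hbc.
- by move=> hc; apply: hab; apply: hda; apply: hcd.
- exact: hcd.
- by move=> hd; apply: hbc; apply: hab; apply: hda.
Qed.
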